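(* Let $(T,\eta,(-)^\#,\sqsubseteq,\Uparrow)$ be a while-monad on $\mathbf{Set}$, $(\Omega,\le)$ a complete lattice, $o:T\Omega\to\Omega$ a meet-preserving Eilenberg–Moore $T$-algebra, $P$ a while program and $b$ a condition. Define $\Phi:\mathbf{Set}_T(\mathbb M,\mathbb M)\to\mathbf{Set}_T(\mathbb M,\mathbb M)$ by $\Phi(f)=\lambda\rho.$ if $\llbracket b\rrbracket\rho=\mathrm{tt}$ then $(f\bullet\llbracket P\rrbracket_T)(\rho)$ else $\eta_{\mathbb M}(\rho)$, and $\Psi$ on join-preserving maps $g:\mathcal P_\Omega(\mathbb M)\to\mathcal P_\Omega(\mathbb M)$ by $\Psi(g)=\lambda\phi.\ g(\llbracket P\rrbracket^c(\phi\wedge_{\mathbb M}\mathrm{grd}_b^{\mathrm{tt}}))\vee_{\mathbb M}(\phi\wedge_{\mathbb M}\mathrm{grd}_b^{\mathrm{ff}})$. Then $\Psi$ maps join-preserving maps to join-preserving maps, and $\Psi\circ sp^o=sp^o\circ\Phi$, i.e. $\Psi(sp^o(f))=sp^o(\Phi(f))$ for every $f\in\mathbf{Set}_T(\mathbb M,\mathbb M)$.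
   Context: Fix a set of values $\mathbb V$, a finite set of variables $X$, and memories $\mathbb M=\mathbb V^X$. Programs: $P::=\mathtt{skip}\mid P;P\mid x:=e\mid \mathtt{if}\ b\ \{P\}\ \mathtt{else}\ \{P\}\mid \mathtt{while}\ b\ \{P\}$. Each condition $b$ has a given interpretation $\llbracket b\rrbracket:\mathbb M\to\{\mathrm{ff},\mathrm{tt}\}$. A while-monad on $\mathbf{Set}$ is a monad $(T,\eta,(-)^\#)$ on $\mathbf{Set}$ together with an $\omega$-cpo structure $(\sqsubseteq_X,\Uparrow_X)$ on each $TX$, such that, with $\sqsubseteq_{X,Y}$ the pointwise order on Kleisli maps $\mathbf{Set}_T(X,Y)=\mathbf{Set}(X,TY)$ and $\Uparrow_{X,Y}=\lambda x.\Uparrow_Y$: Kleisli composition $g\bullet f=g^\#\circ f$ is monotone and $\omega$-continuous in each argument, and $f\bullet\Uparrow_{X,Y}=\Uparrow_{X,Z}$. Monadic semantics: each assignment has a given $\llbracket x:=e\rrbracket\in\mathbf{Set}_T(\mathbb M,\mathbb M)$, and $\llbracket\mathtt{skip}\rrbracket_T=\eta_{\mathbb M}$, $\llbracket P;P'\rrbracket_T=\llbracket P'\rrbracket_T\bullet\llbracket P\rrbracket_T$, $\llbracket x:=e\rrbracket_T=\llbracket x:=e\rrbracket$, $\llbracket\mathtt{if}\ b\ \{P_1\}\ \mathtt{else}\ \{P_2\}\rrbracket_T=\lambda\rho.$ if $\llbracket b\rrbracket\rho=\mathrm{tt}$ then $\llbracket P_1\rrbracket_T(\rho)$ else $\llbracket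 P_2\rrbracket_T(\rho)$, and $\llbracket\mathtt{while}\ b\ \{P\}\rrbracket_T$ is the least fixpoint of the map $\Phi$ above. $\mathcal P_\Omega(Y)=(\mathbf{Set}(Y,\Omega),\le_Y)$ with pointwise order and lattice operations $\wedge_Y,\vee_Y,\bot_Y,\top_Y$. An Eilenberg–Moore algebra $o$ is meet-preserving if each $\phi\mapsto o\circ T\phi:\mathcal P_\Omega(Y)\to\mathcal P_\Omega(TY)$ preserves arbitrary meets. For $f\in\mathbf{Set}_T(Y,Z)$, $wp^o(f)(\phi)=o\circ T\phi\circ f$ and $sp^o(f)$ is the left adjoint of $wp^o(f)$. $\llbracket P\rrbracket^c=sp^o(\llbracket P\rrbracket_T)$. $\mathrm{grd}_b^v(\rho)=\top$ if $\llbracket b\rrbracket\rho=v$, else $\bot$. *)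

(* Defs.v *)
From mathcomp Require Import all_boot.
Set Implicit Arguments.
Unset Strict Implicit.
Unset Printing Implicit Defensive.

(* A monad in Kleisli-triple form (T, ret = eta, bind), with bind x f  *)
(* = f^# x, together with an omega-cpo (le, bot = Uparrow, sup of      *)
(* omega-chains) on each T A, satisfying the while-monad axioms on the *)
(* Kleisli composition  g \bullet f = g^# o f.                          *)
Record whileMonad (T : Type -> Type) := WhileMonad {
  ret : forall A : Type, A -> T A;
  bind : forall A B : Type, T A -> (A -> T B) -> T B;
  bind_ret_l : forall (A B : Type) (a : A) (f : A -> T B), bind (ret a) f = f a;
  bind_ret_r : forall (A : Type) (m : T A), bind m (@ret A) = m;
  bind_assoc : forall (A B C : Type) (m : T A) (f : A -> T B) (g : B -> T C),
      bind (bind m f) g = bind m (fun x => bind (f x) g);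
  tle : forall A : Type, T A -> T A -> Prop;
  tle_refl : forall A (t : T A), tle t t;
  tle_trans : forall A (t u v : T A), tle t u -> tle u v -> tle t v;
  tle_antisym : forall A (t u : T A), tle t u -> tle u t -> t = u;
  tbot : forall A : Type, T A;
  tbot_least : forall A (t : T A), tle (tbot A) t;
  tsup : forall A : Type, (nat -> T A) -> T A;
  tsup_ub : forall A (c : nat -> T A), (forall n, tle (c n) (c n.+1)) ->
      forall n, tle (c n) (tsup c);
  tsup_least : forall A (c : nat -> T A) (u : T A),
      (forall n, tle (c n) (c n.+1)) -> (forall n, tle (c n) u) -> tle (tsup c) u;
  kcomp_mono_l : forall (X Y Z : Type) (f : X -> T Y) (g g' : Y -> T Z),
      (forall y, tle (g y) (g' y)) ->
      forall x, tle (bind (f x) g) (bind (f x) g');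
  kcomp_mono_r : forall (X Y Z : Type) (f f' : X -> T Y) (g : Y -> T Z),
      (forall x, tle (f x) (f' x)) ->
      forall x, tle (bind (f x) g) (bind (f' x) g);
  kcomp_cont_l : forall (X Y Z : Type) (f : X -> T Y) (c : nat -> Y -> T Z),
      (forall n y, tle (c n y) (c n.+1 y)) ->
      forall x, bind (f x) (fun y => tsup (fun n => c n y))
                = tsup (fun n => bind (f x) (c n));
  kcomp_cont_r : forall (X Y Z : Type) (c : nat -> X -> T Y) (g : Y -> T Z),
      (forall n x, tle (c n x) (c n.+1 x)) ->
      forall x, bind (tsup (fun n => c n x)) g
                = tsup (fun n => bind (c n x) g);
  kcomp_bot : forall (X Y Z : Type) (f : Y -> T Z) (x : X),
      bind ((fun _ : X => tbot Y) x) f = (fun _ : X => tbot Z) x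
}.

Arguments ret {T} w {A}.
Arguments bind {T} w {A B}.
Arguments tle {T} w {A}.
Arguments tbot {T} w {A}.
Arguments tsup {T} w {A}.

Section Kleisli.
Variables (T : Type -> Type) (W : whileMonad T).

Definition kcomp (X Y Z : Type) (g : Y -> T Z) (f : X -> T Y) : X -> T Z :=
  fun x => bind W (f x) g.

Definition tmap (A B : Type) (phi : A -> B) (t : T A) : T B :=
  bind W t (fun a => ret W (phi a)).

Definition kbot (X Y : Type) : X -> T Y := fun _ => tbot W.
Definition ksup (X Y : Type) (c : nat -> X -> T Y) : X -> T Y :=
  fun x => tsup W (fun n => c n x).

Definition klfp (X Y : Type) (F : (X -> T Y) -> (X -> T Y)) : X -> T Y :=
  ksup (fun n => iter n F (@kbot X Y)).
End Kleisli.

Inductive prog (X : Type) (E Bc : Type) :=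
| Skip
| Seq of prog X E Bc & prog X E Bc
| Assign of X & E
| Ite of Bc & prog X E Bc & prog X E Bc
| While of Bc & prog X E Bc.

Arguments Skip {X E Bc}.

Section Semantics.
Variables (T : Type -> Type) (W : whileMonad T).
Variables (V : Type) (X : finType) (E Bc : Type).
Notation M := (X -> V).
Variable bsem : Bc -> M -> bool.
Variable asem : X -> E -> M -> T M.

Definition PhiW (b : Bc) (Pc : M -> T M) (f : M -> T M) : M -> T M :=
  fun rho => if bsem b rho then kcomp W f Pc rho else ret W rho.

Fixpoint psem (p : prog X E Bc) : M -> T M :=
  match p with
  | Skip => fun rho => ret W rho
  | Seq p1 p2 => kcomp W (psem p2) (psem p1)
  | Assign x e => asem x e
  | Ite b p1 p2 => fun rho => if bsem b rho then psem p1 rho else psem p2 rho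
  | While b p1 => klfp W (PhiW b (psem p1))
  end.
End Semantics.

Record completeLattice (O : Type) := CompleteLattice {
  ole : O -> O -> Prop;
  ole_refl : forall x, ole x x;
  ole_trans : forall x y z, ole x y -> ole y z -> ole x z;
  ole_antisym : forall x y, ole x y -> ole y x -> x = y;
  oinf : (O -> Prop) -> O;
  oinf_lb : forall (S : O -> Prop) x, S x -> ole (oinf S) x;
  oinf_glb : forall (S : O -> Prop) y, (forall x, S x -> ole y x) -> ole y (oinf S);
  osup : (O -> Prop) -> O;
  osup_ub : forall (S : O -> Prop) x, S x -> ole x (osup S);
  osup_lub : forall (S : O -> Prop) y, (forall x, S x -> ole x y) -> ole (osup S) y
}.

Section Predicates.
Variables (O : Type) (L : completeLattice O).

(* P_Omega(Y) = (Y -> Omega) with pointwise order and lattice operations *)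
Definition ple (Y : Type) (phi psi : Y -> O) := forall y, ole L (phi y) (psi y).
Definition pinf (Y : Type) (S : (Y -> O) -> Prop) : Y -> O :=
  fun y => oinf L (fun w => exists phi, S phi /\ w = phi y).
Definition psup (Y : Type) (S : (Y -> O) -> Prop) : Y -> O :=
  fun y => osup L (fun w => exists phi, S phi /\ w = phi y).
Definition pmeet (Y : Type) (phi psi : Y -> O) : Y -> O :=
  pinf (fun chi => chi = phi \/ chi = psi).
Definition pjoin (Y : Type) (phi psi : Y -> O) : Y -> O :=
  psup (fun chi => chi = phi \/ chi = psi).
Definition otop : O := oinf L (fun _ => False).
Definition obot : O := osup L (fun _ => False).

Definition join_preserving (Y Z : Type) (g : (Y -> O) -> (Z -> O)) :=
  forall S : (Y -> O) -> Prop,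
    g (psup S) = psup (fun chi => exists phi, S phi /\ chi = g phi).
End Predicates.

Section Algebras.
Variables (T : Type -> Type) (W : whileMonad T).
Variables (O : Type) (L : completeLattice O).

Definition EMalgebra (o : T O -> O) :=
  (forall w : O, o (ret W w) = w) /\
  (forall t : T (T O), o (tmap W o t) = o (bind W t (fun u => u))).

Definition meet_preserving (o : T O -> O) :=
  forall (Y : Type) (S : (Y -> O) -> Prop),
    (fun t : T Y => o (tmap W (pinf L S) t))
    = pinf L (fun chi => exists phi, S phi /\ chi = (fun t => o (tmap W phi t))).

Definition wp (o : T O -> O) (Y Z : Type) (f : Y -> T Z) (phi : Z -> O) : Y -> O :=
  fun y => o (tmap W phi (f y)).

(* sp^o(f) = the left adjoint of wp^o(f), given by the standard formula
   sp(f)(psi) = /\ { phi | psi <= wp(f)(phi) }  (it is the left adjoint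
   whenever wp^o(f) preserves arbitrary meets, e.g. for o meet-preserving) *)
Definition sp (o : T O -> O) (Y Z : Type) (f : Y -> T Z) (psi : Y -> O) : Z -> O :=
  pinf L (fun phi => ple L psi (wp o f phi)).
End Algebras.

Definition grd (O : Type) (L : completeLattice O) (V : Type) (X : finType)
  (Bc : Type) (bsem : Bc -> (X -> V) -> bool) (b : Bc) (v : bool) : (X -> V) -> O :=
  fun rho => if bsem b rho == v then otop L else obot L.

Definition PsiW (O : Type) (L : completeLattice O) (V : Type) (X : finType)
  (Bc : Type) (bsem : Bc -> (X -> V) -> bool) (b : Bc)
  (Pc : ((X -> V) -> O) -> ((X -> V) -> O))
  (g : ((X -> V) -> O) -> ((X -> V) -> O)) : ((X -> V) -> O) -> ((X -> V) -> O) :=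
  fun phi => pjoin L (g (Pc (pmeet L phi (grd L bsem b true))))
                     (pmeet L phi (grd L bsem b false)).

(* Main.v *)
Require Import Defs.
From mathcomp Require Import all_boot.
From Stdlib Require Import FunctionalExtensionality Setoid.

Section Lat.
Variables (O : Type) (L : completeLattice O).

Lemma obot_le z : ole L (obot L) z.
Proof. by apply: osup_lub. Qed.

Lemma le_otop z : ole L z (otop L).
Proof. by apply: oinf_glb. Qed.

Lemma psup_le (Y : Type) (S : (Y -> O) -> Prop) y z :
  ole L (psup L S y) z <-> (forall phi, S phi -> ole L (phi y) z).
Proof.
split.
- move=> H phi Sphi; apply: ole_trans H; apply: osup_ub; by exists phi.
- move=> H; apply: osup_lub => w [phi [Sphi ->]]; exact: H.
Qed.

Lemma ple_psup (Y : Type) (S : (Y -> O) -> Prop) chi :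
  ple L (psup L S) chi <-> (forall phi, S phi -> ple L phi chi).
Proof.
split.
- move=> H phi Sphi y; by move/psup_le: (H y); apply.
- move=> H y; apply/psup_le => phi Sphi; exact: H.
Qed.

Lemma pjoin_le (Y : Type) (a c : Y -> O) y z :
  ole L (pjoin L a c y) z <-> ole L (a y) z /\ ole L (c y) z.
Proof.
rewrite /pjoin psup_le; split.
- move=> H; split; apply: H; by [left|right].
- by move=> [H1 H2] phi [->|->].
Qed.

Lemma ple_pjoin (Y : Type) (a c chi : Y -> O) :
  ple L (pjoin L a c) chi <-> ple L a chi /\ ple L c chi.
Proof.
split.
- by move=> H; split=> y; move/pjoin_le: (H y) => [].
- by move=> [H1 H2] y; apply/pjoin_le.
Qed.

Lemma yoneda (Y : Type) (A B : Y -> O) :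
  (forall chi, ple L A chi <-> ple L B chi) -> A = B.
Proof.
move=> H; apply: functional_extensionality => y; apply: ole_antisym.
- exact: (proj2 (H B) (fun z => ole_refl L (B z)) y).
- exact: (proj1 (H A) (fun z => ole_refl L (A z)) y).
Qed.

Lemma meetgrd_le (V : Type) (X : finType) (Bc : Type)
  (bsem : Bc -> (X -> V) -> bool) (b : Bc) (v : bool) phi rho z :
  ole L (pmeet L phi (grd L bsem b v) rho) z <->
  (bsem b rho = v -> ole L (phi rho) z).
Proof.
rewrite /pmeet /pinf /grd.
case E: (bsem b rho == v).
- move/eqP: E => Hb; split.
  + move=> H _; apply: ole_trans H; apply: oinf_glb => w [chi [[->|->] ->]].
    * exact: ole_refl.
    * rewrite Hb eqxx; exact: le_otop.
  + move=> H; apply: ole_trans (H Hb); apply: oinf_lb; exists phi; by split; [left|].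
- split; first by move=> _ Hb; rewrite Hb eqxx in E.
  move=> _; apply: ole_trans (obot_le z); apply: oinf_lb.
  exists (fun rho0 : X -> V => if bsem b rho0 == v then otop L else obot L).
  split; first by right.
  by rewrite E.
Qed.

Lemma ple_meetgrd (V : Type) (X : finType) (Bc : Type)
  (bsem : Bc -> (X -> V) -> bool) (b : Bc) (v : bool) phi chi :
  ple L (pmeet L phi (grd L bsem b v)) chi <->
  (forall rho, bsem b rho = v -> ole L (phi rho) (chi rho)).
Proof.
split.
- by move=> H rho; move/meetgrd_le: (H rho).
- by move=> H rho; apply/meetgrd_le; apply: H.
Qed.
End Lat.

Section Alg.
Variables (T : Type -> Type) (W : whileMonad T).
Variables (O : Type) (L : completeLattice O).
Variables (o : T O -> O) (Hem : EMalgebra W o) (Hmeet : meet_preserving W L o).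

Lemma wp_inf (Y Z : Type) (h : Y -> T Z) (S : (Z -> O) -> Prop) y :
  wp W o h (pinf L S) y =
  oinf L (fun w => exists chi, (exists phi, S phi /\ chi = (fun t => o (tmap W phi t)))
                   /\ w = chi (h y)).
Proof.
have := f_equal (fun F => F (h y)) (Hmeet Z S). by [].
Qed.

Lemma wp_mono (Y Z : Type) (h : Y -> T Z) phi chi :
  ple L phi chi -> ple L (wp W o h phi) (wp W o h chi).
Proof.
move=> H y.
have E : pinf L (fun c => c = phi \/ c = chi) = phi.
  apply: functional_extensionality => z; apply: ole_antisym.
  - apply: oinf_lb; exists phi; by split; [left|].
  - apply: oinf_glb => w [c [[->|->] ->]]; [exact: ole_refl| exact: H].
rewrite -E wp_inf; apply: oinf_lb.
exists (fun t => o (tmap W chi t)); split; last by [].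
by exists chi; split; [right|].
Qed.

Lemma sp_le (Y Z : Type) (h : Y -> T Z) psi chi :
  ple L (sp W L o h psi) chi <-> ple L psi (wp W o h chi).
Proof.
split.
- move=> H.
  have H1 : ple L psi (wp W o h (sp W L o h psi)).
    move=> y; rewrite /sp wp_inf; apply: oinf_glb => w [c [[phi [Sphi ->]] ->]].
    exact: Sphi.
  move=> y; apply: ole_trans (H1 y) _; exact: wp_mono.
- move=> H y; apply: oinf_lb; by exists chi.
Qed.

Lemma wp_Phi (M : Type) (c : M -> bool) (h : M -> T M) (g : M -> T M) chi rho :
  wp W o (fun r => if c r then bind W (h r) g else ret W r) chi rho =
  if c rho then wp W o h (wp W o g chi) rho else chi rho.
Proof.
rewrite /wp /tmap; case: (c rho).
- rewrite bind_assoc.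
  have := (proj2 Hem) (bind W (h rho) (fun y => ret W (bind W (g y) (fun a => ret W (chi a))))).
  rewrite /tmap !bind_assoc.
  have -> : (fun x : M => bind W (ret W (bind W (g x) (fun a : M => ret W (chi a))))
                     (fun a : T O => ret W (o a)))
          = (fun x => ret W (o (bind W (g x) (fun a : M => ret W (chi a))))).
    by apply: functional_extensionality => x; rewrite bind_ret_l.
  have -> : (fun x : M => bind W (ret W (bind W (g x) (fun a : M => ret W (chi a))))
                     (fun u => u))
          = (fun x => bind W (g x) (fun a : M => ret W (chi a))).
    by apply: functional_extensionality => x; rewrite bind_ret_l.
  by move=> ->.
- by rewrite bind_ret_l (proj1 Hem).
Qed.
End Alg.

Theorem mainTheorem3
  (T : Type -> Type) (W : whileMonad T)
  (O : Type) (L : completeLattice O)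
  (o : T O -> O) (Hem : EMalgebra W o) (Hmeet : meet_preserving W L o)
  (V : Type) (X : finType) (E Bc : Type)
  (bsem : Bc -> (X -> V) -> bool) (asem : X -> E -> (X -> V) -> T (X -> V))
  (P : prog X E Bc) (b : Bc) :
  let Pt := psem W bsem asem P in
  let Phi := PhiW W bsem b Pt in
  let Psi := PsiW L bsem b (sp W L o Pt) in
  (forall g : ((X -> V) -> O) -> ((X -> V) -> O),
      join_preserving L g -> join_preserving L (Psi g)) /\
  (forall f : (X -> V) -> T (X -> V),
      Psi (sp W L o f) = sp W L o (Phi f)).
Proof.
move=> Pt Phi Psi; split.
- move=> g Hg S.
  have Hsp : sp W L o Pt (pmeet L (psup L S) (grd L bsem b true))
     = psup L (fun c => exists phi, S phi /\ c = sp W L o Pt (pmeet L phi (grd L bsem b true))).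
    apply: (@yoneda _ L) => chi; rewrite ple_psup sp_le // ple_meetgrd; split.
    + move=> H c [phi [Sphi ->]]; apply/sp_le => //; apply/ple_meetgrd => rho Hr.
      by move/psup_le: (H rho Hr); apply.
    + move=> H rho Hr; apply/psup_le => phi Sphi.
      have := H _ (ex_intro _ phi (conj Sphi erefl)).
      by move/sp_le => /(_ Hmeet) /ple_meetgrd; apply.
  apply: (@yoneda _ L) => chi; rewrite /Psi /PsiW ple_pjoin Hsp Hg ple_psup ple_psup
     ple_meetgrd; split.
  + move=> [H1 H2] c [phi [Sphi ->]]; apply/ple_pjoin; split.
    * apply: H1; exists (sp W L o Pt (pmeet L phi (grd L bsem b true))); split => //.
      by exists phi.
    * apply/ple_meetgrd => rho Hr; by move/psup_le: (H2 rho Hr); apply.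
  + move=> H; split.
    * move=> c [c' [[phi [Sphi ->]] ->]].
      by have /ple_pjoin [] := H _ (ex_intro _ phi (conj Sphi erefl)).
    * move=> rho Hr; apply/psup_le => phi Sphi.
      have /ple_pjoin [_ /ple_meetgrd] := H _ (ex_intro _ phi (conj Sphi erefl)).
      by apply.
- move=> f; apply: functional_extensionality => phi; apply: (@yoneda _ L) => chi.
  rewrite /Psi /PsiW ple_pjoin sp_le // sp_le // sp_le // !ple_meetgrd.
  split.
  + move=> [H1 H2] rho; rewrite /Phi /PhiW /kcomp wp_Phi //.
    case Hr: (bsem b rho); [exact: H1 | exact: H2].
  + move=> H; split=> rho Hr; move: (H rho); rewrite /Phi /PhiW /kcomp wp_Phi // Hr //.
Qed.
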